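(* Let $k\ge 0$ be an integer and let $G$ be a graph with $m$ edges, where $m\ge\max\{\tfrac{1}{2}k^2+6k+3,\,7k+25\}$. If $q(G)\ge m-k+1$, then $G$ contains $K_{1,m-k}$ as a subgraph.
   Context: All graphs are finite, simple and undirected. $q(G)$ denotes the signless Laplacian spectral radius of $G$, i.e. the largest eigenvalue of $Q(G)=D(G)+A(G)$, where $A(G)$ is the adjacency matrix and $D(G)$ the diagonal matrix of vertex degrees. $K_{1,t}$ denotes the star with $t$ edges (on $t+1$ vertices). *)

(* Defs.v *)
From HB Require Import structures.
From mathcomp Require Import all_boot all_order all_algebra.
From mathcomp Require Import polyrcf.
Set Implicit Arguments. Unset Strict Implicit. Unset Printing Implicit Defensive.
Import Order.TTheory GRing.Theory Num.Theory.
Local Open Scope ring_scope.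

(* A finite simple graph on vertex set 'I_n is a symmetric irreflexive
   relation e : rel 'I_n (checked as hypotheses in the theorem). *)

Definition nedges (n : nat) (e : rel 'I_n) : nat :=
  #|[set p : 'I_n * 'I_n | (p.1 < p.2)%N && e p.1 p.2]|.

Definition deg (n : nat) (e : rel 'I_n) (v : 'I_n) : nat :=
  #|[set u : 'I_n | e v u]|.

Definition adjmx (R : nzRingType) (n : nat) (e : rel 'I_n) : 'M[R]_n :=
  \matrix_(i, j) (e i j)%:R.
Definition degmx (R : nzRingType) (n : nat) (e : rel 'I_n) : 'M[R]_n :=
  \matrix_(i, j) ((i == j)%:R * (deg e i)%:R).
Definition signlessQ (R : nzRingType) (n : nat) (e : rel 'I_n) : 'M[R]_n :=
  degmx R e + adjmx R e.

(* signless Laplacian spectral radius: the largest eigenvalue of Q(G),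
   i.e. the largest real root of its characteristic polynomial
   (Q is real symmetric, so all its eigenvalues are real; they are also
   >= 0, so the default 0 for the empty graph is harmless). *)
Definition qrad (R : rcfType) (n : nat) (e : rel 'I_n) : R :=
  \big[Num.max/0]_(x <- rootsR (char_poly (signlessQ R e))) x.

Definition has_star (n : nat) (e : rel 'I_n) (t : nat) : Prop :=
  exists (c : 'I_n) (f : 'I_t -> 'I_n), injective f /\ forall i, e c (f i).

(* Main.v *)
Require Import Defs.
From HB Require Import structures.
From mathcomp Require Import all_boot all_order all_algebra.
From mathcomp Require Import polyrcf.
From mathcomp Require Import zify lra.
Import Order.TTheory GRing.Theory Num.Theory.
Set Implicit Arguments. Unset Strict Implicit. Unset Printing Implicit Defensive.

Section Comb.
Variables (n : nat) (e : rel 'I_n).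
Hypotheses (sym : symmetric e) (irr : irreflexive e).

Definition Pe := [set p : 'I_n * 'I_n | e p.1 p.2].

Lemma cardPe : #|Pe| = 2 * nedges e.
Proof.
set A := [set p : 'I_n * 'I_n | (p.1 < p.2)%N && e p.1 p.2].
set B := [set (p.2, p.1) | p in A].
have -> : Pe = A :|: B.
  apply/setP => [[a b]]; rewrite !inE /=.
  case: (ltngtP a b) => h.
  - rewrite /=; apply/idP/orP => [H|[//|/imsetP[[c d]]]]; first by left.
    by rewrite inE /= => /andP[_ H] [-> ->]; rewrite sym.
  - rewrite /=; apply/idP/imsetP => [H|[[c d]]].
      by exists (b, a); rewrite // inE /= h sym.
    by rewrite inE /= => /andP[_ H] [-> ->]; rewrite sym.
  - have ab : a = b by apply: val_inj.
    subst b; rewrite irr /=; apply/esym/negbTE/imsetP => [[[c d]]].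
    rewrite inE /= => /andP[H _] [ec ed]; subst; lia.
have dis : A :&: B = set0.
  apply/setP => [[a b]]; rewrite !inE /=; apply/negbTE.
  apply/negP => /andP[/andP[h _] /imsetP[[c d]]].
  rewrite inE /= => /andP[h' _] [ea eb]; subst; lia.
have cB : #|B| = #|A|.
  by apply: card_imset => [[a b] [c d]] [-> ->].
have := cardsUI A B; rewrite dis cards0 addn0 cB => ->.
by rewrite /nedges -/A; lia.
Qed.

Lemma deg1 w : deg e w = #|[set p in Pe | p.1 == w]|.
Proof.
have -> : [set p in Pe | p.1 == w] = [set (w, u) | u in [set u | e w u]].
  apply/setP => [[a b]]; rewrite !inE /=; apply/andP/imsetP => [[H /eqP ea]|[u]].
    by subst; exists b; rewrite ?inE.
  by rewrite inE => H [-> ->].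
by rewrite card_imset // => u v [].
Qed.

Lemma deg2 w : deg e w = #|[set p in Pe | p.2 == w]|.
Proof.
have -> : [set p in Pe | p.2 == w] = [set (u, w) | u in [set u | e w u]].
  apply/setP => [[a b]]; rewrite !inE /=; apply/andP/imsetP => [[H /eqP ea]|[u]].
    by subst; exists a; rewrite ?inE // sym.
  by rewrite inE => H [-> ->]; rewrite sym.
by rewrite card_imset // => u v [].
Qed.

Lemma sumdeg1 (W : {set 'I_n}) :
  (\sum_(w in W) deg e w = #|[set p in Pe | p.1 \in W]|)%N.
Proof.
rewrite -sum1_card (partition_big (fun p => p.1) (mem W)) /=; last first.
  by move=> p; rewrite inE => /andP[].
apply: eq_bigr => w wW; rewrite deg1 -sum1_card; apply: eq_bigl => p.
rewrite !inE; case: eqP => [->|]; by rewrite ?wW ?andbT ?andbF.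
Qed.

Lemma sumdeg2 (W : {set 'I_n}) :
  (\sum_(w in W) deg e w = #|[set p in Pe | p.2 \in W]|)%N.
Proof.
rewrite -sum1_card (partition_big (fun p => p.2) (mem W)) /=; last first.
  by move=> p; rewrite inE => /andP[].
apply: eq_bigr => w wW; rewrite deg2 -sum1_card; apply: eq_bigl => p.
rewrite !inE; case: eqP => [->|]; by rewrite ?wW ?andbT ?andbF.
Qed.

Definition Nb u := [set w | e u w].

Lemma S_le u : (\sum_(w in Nb u) deg e w + deg e u <= 2 * nedges e)%N.
Proof.
have := sumdeg1 (u |: Nb u).
rewrite (bigD1 u) ?inE ?eqxx //= => H.
have -> : (\sum_(w in Nb u) deg e w = \sum_(i in u |: Nb u | i != u) deg e i)%N.
  apply: eq_bigl => w; rewrite !inE; case: eqP => [->|_] /=; rewrite ?irr ?andbT ?andbF ?orbT //.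
rewrite addnC H -cardPe; apply: subset_leq_card.
by apply/subsetP => p; rewrite !inE => /andP[].
Qed.

Lemma S_le_d2 u : #|Nb u| = 2 -> (\sum_(w in Nb u) deg e w <= nedges e + 1)%N.
Proof.
move=> /eqP /cards2P [w1 [w2 [ne Nu]]].
set A1 := [set p in Pe | p.1 \in Nb u].
set A2 := [set p in Pe | p.2 \in Nb u].
have h1 := sumdeg1 (Nb u). have h2 := sumdeg2 (Nb u).
have := cardsUI A1 A2.
have hU : (#|A1 :|: A2| <= #|Pe|)%N.
  by apply: subset_leq_card; apply/subsetP => p; rewrite !inE => /orP[] /andP[].
have hI : (#|A1 :&: A2| <= 2)%N.
  have c2 : (#|[set (w1, w2); (w2, w1)]| <= 2)%N by rewrite cards2; case: (_ != _).
  apply: leq_trans c2.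
  apply: subset_leq_card; apply/subsetP => [[a b]]; rewrite /A1 /A2 Nu !inE /=.
  move=> /andP[/andP[eab ha] /andP[_ hb]].
  case/orP: ha => /eqP ha; case/orP: hb => /eqP hb; subst;
    by rewrite ?irr in eab; rewrite ?eqxx ?orbT.
rewrite -h1 -h2 cardPe in hU * => H; move: H hI hU; set s := (\sum_(w in Nb u) deg e w)%N; set x := #|A1 :&: A2|; set y := #|A1 :|: A2|; clearbody s x y; lia.
Qed.

End Comb.
Local Open Scope ring_scope.
Lemma eig_bound (R : rcfType) n (e : rel 'I_n) (l : R) :
  symmetric e -> 0 < l -> root (char_poly (signlessQ R e)) l ->
  exists j, (0 < deg e j)%N /\
    l * (deg e j)%:R <= (deg e j)%:R ^+ 2 + (\sum_(w in [set w | e j w]) deg e w)%:R.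
Proof.
move=> sym lpos; rewrite -eigenvalue_root_char => /eigenvalueP [v Hv vn0].
pose x i := v 0 i.
have key : forall j, l * x j = (deg e j)%:R * x j + \sum_(i in [set w | e j w]) x i.
  move=> j; have := congr1 (fun M : 'M[R]_(1, n) => M 0 j) Hv; rewrite !mxE => <-.
  rewrite (eq_bigr (fun i => v 0 i * ((i == j)%:R * (deg e i)%:R) + v 0 i * (e i j)%:R));
    last by move=> i _; rewrite !mxE mulrDr.
  rewrite big_split /= (bigD1 j) //= eqxx mul1r big1 ?addr0; last first.
    by move=> i /negbTE ->; rewrite mul0r mulr0.
  rewrite mulrC; congr (_ + _); rewrite [RHS]big_mkcond /=; apply: eq_bigr => i _.
  by case: ifP; rewrite inE sym => ->; rewrite ?mulr1 ?mulr0.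
have iso : forall i, x i != 0 -> (0 < deg e i)%N.
  move=> i; apply: contraR; rewrite -leqNgt leqn0 => /eqP d0.
  have := key i; rewrite d0 mul0r add0r.
  have -> : [set w | e i w] = set0 by apply: cards0_eq.
  rewrite big_set0 => /eqP; rewrite mulf_eq0 => /orP[|//].
  by rewrite gt_eqF.
have [i0 xi0] : exists i0, x i0 != 0.
  case: (pickP (fun i => x i != 0)) => [i0 H|H]; first by exists i0.
  case/negP: vn0; apply/eqP/rowP => i; rewrite !mxE.
  by have := H i => /negbFE /eqP.
pose r i := `|x i| / (deg e i)%:R.
have [j _ Hj] := @arg_maxP _ R 'I_n i0 xpredT r isT.
have ri0 : 0 < r i0 by rewrite divr_gt0 ?normr_gt0 // ltr0n iso.
have rj : 0 < r j by apply: lt_le_trans ri0 (Hj i0 isT).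
have xj : x j != 0.
  by apply/eqP => xj0; move: rj; rewrite /r xj0 normr0 mul0r ltxx.
have dj := iso _ xj.
exists j; split => //.
set d := (deg e j)%:R.
have dpos : 0 < d by rewrite ltr0n.
have xjE : `|x j| = r j * d by rewrite /r divfK // gt_eqF.
have H1 : `|l - d| * `|x j| <= r j * (\sum_(w in [set w | e j w]) deg e w)%:R.
  rewrite -normrM mulrBl key addrAC mulrC subrr add0r.
  apply: le_trans (ler_norm_sum _ _ _) _.
  rewrite natr_sum mulr_sumr; apply: ler_sum => i; rewrite inE => eji.
  have di : (0 < deg e i)%N.
    by rewrite /deg card_gt0; apply/set0Pn; exists j; rewrite inE sym.
  have : r i <= r j := Hj i isT.
  rewrite /r ler_pdivrMr ?ltr0n //.
have H2 : (l - d) * d <= (\sum_(w in [set w | e j w]) deg e w)%:R.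
  rewrite xjE mulrA (mulrC _ (r j)) -mulrA in H1.
  have := ler_pM2l rj; move=> <-. 
  apply: le_trans H1; rewrite ler_pM2l // ler_pM2r //.
  by apply: ler_norm.
rewrite mulrBl in H2; rewrite expr2; lra.
Qed.
Unset Implicit Arguments.
Lemma bigmax_ge (R : realDomainType) (s : seq R) (c : R) :
  0 < c -> c <= \big[Num.max/0]_(x <- s) x -> exists2 x, x \in s & c <= x.
Proof.
move=> c0; elim: s => [|a s IH]; first by rewrite big_nil => H; move: (lt_le_trans c0 H); rewrite ltxx.
rewrite big_cons le_max => /orP[H|/IH [x xs cx]]; first by exists a; rewrite ?mem_head.
by exists x; rewrite // in_cons xs orbT.
Qed.

Lemma star_of_deg n (e : rel 'I_n) c t : (t <= deg e c)%N -> has_star e t.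
Proof.
move=> Ht; set N := [set u | e c u].
have sz : (t <= size (enum N))%N by rewrite -cardE.
exists c, (fun i => nth c (enum N) i); split.
  move=> i j /eqP; rewrite nth_uniq ?enum_uniq //; last 2 first.
  - by apply: leq_trans (ltn_ord i) sz.
  - by apply: leq_trans (ltn_ord j) sz.
  by move=> /eqP /val_inj.
move=> i; have : nth c (enum N) i \in N by rewrite -mem_enum mem_nth // (leq_trans (ltn_ord i) sz).
by rewrite inE.
Qed.

Theorem theorem1p6 (R : rcfType) (n k : nat) (e : rel 'I_n) :
  symmetric e -> irreflexive e ->
  (k ^ 2 + 12 * k + 6 <= 2 * nedges e)%N ->
  (7 * k + 25 <= nedges e)%N ->
  (nedges e)%:R - k%:R + 1 <= qrad R e ->
  has_star e (nedges e - k).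
Proof.
move=> sym irr _ H7 Hq.
set m := nedges e in H7 Hq *.
have Hmk : (k <= m)%N by lia.
rewrite -(natrB _ Hmk) natr1 in Hq.
have [l lin Hl] := @bigmax_ge _ _ _ (ltr0Sn R _) Hq.
have pn0 : char_poly (signlessQ R e) != 0 by apply: monic_neq0; apply: char_poly_monic.
have lroot : root (char_poly (signlessQ R e)) l.
  by have := roots_on_rootsR pn0 l; rewrite lin => /andP[].
have lpos : 0 < l by apply: lt_le_trans Hl; rewrite ltr0Sn.
have [j [dj Hj]] := eig_bound sym lpos lroot.
set d := deg e j in dj Hj.
set S := (\sum_(w in [set w | e j w]) deg e w)%N in Hj.
have Hn : ((m - k).+1 * d <= d ^ 2 + S)%N.
  rewrite -(ler_nat R) natrD natrM natrX.
  apply: le_trans Hj; rewrite ler_pM2r ?ltr0n //.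
case: (boolP [exists c, (m - k <= deg e c)%N]) => [/existsP [c Hc]|].
  exact: star_of_deg Hc.
rewrite negb_exists => /forallP Hall.
have Hdeg : forall c, (deg e c < m - k)%N by move=> c; have := Hall c; rewrite -ltnNge.
exfalso.
have HS1 : (S <= d * (m - k).-1)%N.
  rewrite /S /d /deg -sum_nat_const; apply: leq_sum => w _.
  by have := Hdeg w; rewrite /deg; lia.
have HS2 : (S + d <= 2 * m)%N by apply: S_le.
have Hdm : (d < m - k)%N by apply: Hdeg.
have HS3 : d = 2%N -> (S <= m + 1)%N by move=> d2; apply: S_le_d2.
clearbody d S.
case: (ltngtP d 2) => [d1|d3|d2].
- have d1' : d = 1%N by lia.
  subst d; lia.
- have hint : ((d - 3) * (m - k - 1 - d) >= 0)%N by [].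
  nia.
- move: (HS3 d2) Hn; subst d => h1 h2; lia.
Qed.
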